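(* Let $\Omega\subset\mathbb{R}^2$ be a bounded domain, $X\subset\overline{\Omega}$ finite with $X\setminus\partial\Omega\subset\mathrm{int}(\mathrm{conv}(X\cap\partial\Omega))$, and $f_X$ a discrete load on $X$. Let $x_1,x_2,x_3\in X$ be colinear with $x_2\in[x_1,x_3]$. Assume $(\mathbf{s},\mathbf{q},\mathbf{r})$ solves $(\mathcal{P}_X)$ and $(\mathbf{u}_1,\mathbf{u}_2,\mathbf{w})$ (together with some slack vectors) solves $(\mathcal{P}_X^* )$, and set $\mathbf{z}=\frac12\mathbf{w}$, identified with the function $z:X\to\mathbb{R}$ that equals $z_i$ at $\chi(i)$ and vanishes on $X\cap\partial\Omega$. Let $k$ be the bar index with $\{\chi_-(k),\chi_+(k)\}=\{x_1,x_3\}$. If $s_k\ne0$, then the points $(x_1,z(x_1)),(x_2,z(x_2)),(x_3,z(x_3))\in\mathbb{R}^3$ are colinear.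
   Context: Discrete setting: $\bar n=\#X$, $n=\#(X\setminus\partial\Omega)$, enumeration $\chi:\{1,\dots,n\}\to X\setminus\partial\Omega$; $m=\bar n(\bar n-1)/2$ and enumeration $k\mapsto\{\chi_-(k),\chi_+(k)\}$ of all unordered pairs of distinct points of $X$. $\mathbf{f}\in\mathbb{R}^n$, $f_i=f_X(\{\chi(i)\})$; $l_k=|\chi_+(k)-\chi_-(k)|$. Vectors $\mathbf{u}_1,\mathbf{u}_2,\mathbf{w}\in\mathbb{R}^n$ are identified with $u:X\to\mathbb{R}^2$, $w:X\to\mathbb{R}$ vanishing on $X\cap\partial\Omega$ ($(u_{1;i},u_{2;i})=u(\chi(i))$, $w_i=w(\chi(i))$). $\mathbf{B}_1,\mathbf{B}_2,\mathbf{D}\in\mathbb{R}^{m\times n}$: $(\mathbf{B}_1\mathbf{u}_1+\mathbf{B}_2\mathbf{u}_2)_k=(u(\chi_+(k))-u(\chi_-(k)))\cdot(\chi_+(k)-\chi_-(k))/l_k$, $(\mathbf{D}\mathbf{w})_k=w(\chi_+(k))-w(\chi_-(k))$. $\mathrm{K}=\{(t_1,t_2,t_3):t_1,t_2\ge0,2t_1t_2\ge t_3^2\}$, applied componentwise as $\mathrm{K}^m$. $(\mathcal{P}_X)$: $\inf\{\mathbf{l}^\top\mathbf{s}+2\mathbf{l}^\top\mathbf{r}:\mathbf{s},\mathbf{r}\in\mathbb{R}^m_+,\mathbf{q}\in\mathbb{R}^m,\mathbf{B}_1^\top\mathbf{s}=\mathbf{B}_2^\top\mathbf{s}=\mathbf{0},\mathbf{D}^\top\mathbf{q}=\mathbf{f},(\mathbf{r},\mathbf{s},\mathbf{q})\in\mathrm{K}^m\}$.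 $(\mathcal{P}_X^* )$: $\sup\{\mathbf{f}^\top\mathbf{w}:\mathbf{t}_2+\mathbf{B}_1\mathbf{u}_1+\mathbf{B}_2\mathbf{u}_2=\mathbf{l},\mathbf{t}_3+\mathbf{D}\mathbf{w}=\mathbf{0},\mathbf{t}_1=2\mathbf{l},(\mathbf{t}_1,\mathbf{t}_2,\mathbf{t}_3)\in\mathrm{K}^m\}$ over $\mathbf{u}_1,\mathbf{u}_2,\mathbf{w}\in\mathbb{R}^n$, $\mathbf{t}_1,\mathbf{t}_2\in\mathbb{R}^m_+$, $\mathbf{t}_3\in\mathbb{R}^m$. *)

(* Defs.v *)
From HB Require Import structures.
From mathcomp Require Import all_boot all_order all_algebra.
From mathcomp Require Import all_classical all_reals all_analysis.
Set Implicit Arguments. Unset Strict Implicit. Unset Printing Implicit Defensive.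
Import Order.TTheory GRing.Theory Num.Theory.
Import numFieldNormedType.Exports.
Local Open Scope classical_set_scope.
Local Open Scope ring_scope.

Section Defs.
Variable R : realType.
Notation P2 := (R * R)%type.

Definition bdry (A : set P2) : set P2 := closure A `\` interior A.

Definition bounded_domain (O : set P2) : Prop :=
  O !=set0 /\ open O /\ connected O /\
  exists M : R, forall p, O p -> `|p.1| <= M /\ `|p.2| <= M.

Definition conv (A : set P2) : set P2 :=
  [set p | exists (N : nat) (pts : 'I_N -> P2) (lam : 'I_N -> R),
     (forall i, A (pts i)) /\ (forall i, 0 <= lam i) /\ \sum_i lam i = 1 /\
     p.1 = \sum_i lam i * (pts i).1 /\ p.2 = \sum_i lam i * (pts i).2].

Definition edist (x y : P2) : R := Num.sqrt ((x.1 - y.1) ^+ 2 + (x.2 - y.2) ^+ 2).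

(* The discrete setting: X finite (a seq) in the closure of O with
   X \ bdry O inside int conv (X ∩ bdry O); chi enumerates X \ bdry O
   bijectively by 'I_n; k |-> {chim k, chip k} enumerates bijectively the
   unordered pairs of distinct points of X by 'I_m. *)
Definition admissible_setting (O : set P2) (X : seq P2) (n m : nat)
    (chi : 'I_n -> P2) (chim chip : 'I_m -> P2) : Prop :=
  bounded_domain O /\
  (forall x, x \in X -> closure O x) /\
  (forall x, x \in X -> ~ bdry O x ->
      interior (conv [set y | y \in X /\ bdry O y]) x) /\
  injective chi /\
  (forall i, chi i \in X /\ ~ bdry O (chi i)) /\
  (forall x, x \in X -> ~ bdry O x -> exists i, chi i = x) /\
  (forall k, chim k \in X /\ chip k \in X /\ chim k != chip k) /\
  (forall k k', ((chim k = chim k' /\ chip k = chip k') \/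
                 (chim k = chip k' /\ chip k = chim k')) -> k = k') /\
  (forall x y, x \in X -> y \in X -> x != y ->
     exists k, (chim k = x /\ chip k = y) \/ (chim k = y /\ chip k = x)).

Variables (n m : nat) (chi : 'I_n -> P2) (chim chip : 'I_m -> P2).

Definition lvec : 'cV[R]_m := \col_k edist (chip k) (chim k).

(* identification of v in R^n with the function X -> R vanishing on bdry *)
Definition ext (v : 'cV[R]_n) (x : P2) : R := \sum_i (chi i == x)%:R * v i 0.

(* the matrices B1, B2, D written entrywise:
   (B1 u1 + B2 u2)_k = (u(chip k) - u(chim k)) . (chip k - chim k) / l_k,
   (D w)_k = w(chip k) - w(chim k). *)
Definition Dmx : 'M[R]_(m, n) :=
  \matrix_(k, i) ((chi i == chip k)%:R - (chi i == chim k)%:R).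
Definition B1mx : 'M[R]_(m, n) :=
  \matrix_(k, i) (((chi i == chip k)%:R - (chi i == chim k)%:R) *
                   ((chip k).1 - (chim k).1) / lvec k 0).
Definition B2mx : 'M[R]_(m, n) :=
  \matrix_(k, i) (((chi i == chip k)%:R - (chi i == chim k)%:R) *
                   ((chip k).2 - (chim k).2) / lvec k 0).

Definition inK (t1 t2 t3 : R) : Prop := 0 <= t1 /\ 0 <= t2 /\ t3 ^+ 2 <= 2 * t1 * t2.

Variable f : 'cV[R]_n.

Definition PX_feasible (s q r : 'cV[R]_m) : Prop :=
  (forall k, 0 <= s k 0) /\ (forall k, 0 <= r k 0) /\
  B1mx^T *m s = 0 /\ B2mx^T *m s = 0 /\ Dmx^T *m q = f /\
  (forall k, inK (r k 0) (s k 0) (q k 0)).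

Definition PX_obj (s r : 'cV[R]_m) : R :=
  \sum_k lvec k 0 * s k 0 + 2 * \sum_k lvec k 0 * r k 0.

Definition PX_solves (s q r : 'cV[R]_m) : Prop :=
  PX_feasible s q r /\
  forall s1 q1 r1, PX_feasible s1 q1 r1 -> PX_obj s r <= PX_obj s1 r1.

Definition PXd_feasible (u1 u2 w : 'cV[R]_n) (t1 t2 t3 : 'cV[R]_m) : Prop :=
  (forall k, 0 <= t1 k 0) /\ (forall k, 0 <= t2 k 0) /\
  t2 + B1mx *m u1 + B2mx *m u2 = lvec /\
  t3 + Dmx *m w = 0 /\
  t1 = 2 *: lvec /\
  (forall k, inK (t1 k 0) (t2 k 0) (t3 k 0)).

Definition PXd_obj (w : 'cV[R]_n) : R := \sum_i f i 0 * w i 0.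

Definition PXd_solves (u1 u2 w : 'cV[R]_n) : Prop :=
  (exists t1 t2 t3, PXd_feasible u1 u2 w t1 t2 t3) /\
  forall v1 v2 w1 e1 e2 e3, PXd_feasible v1 v2 w1 e1 e2 e3 ->
    PXd_obj w1 <= PXd_obj w.

End Defs.

Definition lift3 {R : realType} (x : (R * R)%type) (h : R) : 'rV[R]_3 :=
  \row_(j < 3) [:: x.1; x.2; h]`_j.

Definition collinear3 {R : realType} (a b c : 'rV[R]_3) : Prop :=
  exists (p d : 'rV[R]_3) (ta tb tc : R),
    a = p + ta *: d /\ b = p + tb *: d /\ c = p + tc *: d.

(* Main.v *)
Require Import Defs.
From HB Require Import structures.
From mathcomp Require Import all_boot all_order all_algebra.
From mathcomp Require Import all_classical all_reals all_analysis.
From mathcomp Require Import ring lra.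
Import Order.TTheory GRing.Theory Num.Theory.
Import numFieldNormedType.Exports.
Local Open Scope ring_scope.
Set Implicit Arguments. Unset Strict Implicit.

Section Gordan.
Variable R : realFieldType.

Lemma below_exists (up : seq R) : exists z, forall y, y \in up -> z < y.
Proof.
elim: up => [|y up [z Hz]]; first by exists 0.
case: (ltrP z y) => h.
- exists z => y'; rewrite in_cons => /orP[/eqP->//|]; exact: Hz.
- exists (y - 1) => y'; rewrite in_cons => /orP[/eqP->|hy]; first lra.
  have := Hz _ hy; lra.
Qed.

Lemma above_between (M : R) (up : seq R) : (forall y, y \in up -> M < y) ->
  exists z, M < z /\ forall y, y \in up -> z < y.
Proof.
elim: up => [|y up IH] H; first by exists (M + 1); split => //; lra.
have [|z [Mz Hz]] := IH.
  by move=> y' hy'; apply: H; rewrite in_cons hy' orbT.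
have My := H y (mem_head y up).
case: (lerP z y) => hzy.
- exists ((M + z)/2); split; first lra.
  move=> y'; rewrite in_cons => /orP[/eqP->|hy']; first lra.
  have := Hz _ hy'; lra.
- exists ((M + y)/2); split; first lra.
  move=> y'; rewrite in_cons => /orP[/eqP->|hy']; first lra.
  have := Hz _ hy'; lra.
Qed.

Lemma sep_exists (lo up : seq R) :
  (forall x y, x \in lo -> y \in up -> x < y) ->
  exists z, (forall x, x \in lo -> x < z) /\ (forall y, y \in up -> z < y).
Proof.
elim: lo => [|x lo IH] H.
  by have [z Hz] := below_exists up; exists z; split.
have [|z [Hl Hu]] := IH.
  by move=> x' y hx hy; apply: H => //; rewrite in_cons hx orbT.
case: (ltrP x z) => hxz.
- have [z' [Mz' Hz']] := above_between Hu.
  exists z'; split => // x'; rewrite in_cons => /orP[/eqP->|hx]; first lra.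
  have := Hl _ hx; lra.
- have [z' [Mz' Hz']] := above_between (M:=x) (fun y hy => H x y (mem_head x lo) hy).
  exists z'; split => // x'; rewrite in_cons => /orP[/eqP->|hx]; first lra.
  have := Hl _ hx; lra.
Qed.

Lemma In_filter (T : Type) (p : pred T) (s : seq T) x :
  List.In x (seq.filter p s) <-> List.In x s /\ p x.
Proof.
elim: s => [|y s IH] /=; first by split => // -[].
case hy: (p y) => /=; split.
- move=> [<-|/IH[h1 h2]]; first by split; [left|].
  by split; [right|].
- move=> [[->|hx] px]; first by left.
  by right; apply/IH.
- by move=> /IH[h1 h2]; split; [right|].
- move=> [[h|hx] px]; last by apply/IH.
  by rewrite -h hy in px.
Qed.

Lemma In_allpairs (T1 T2 T : Type) (f : T1 -> T2 -> T) s t a b :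
  List.In a s -> List.In b t -> List.In (f a b) [seq f x y | x <- s, y <- t].
Proof.
elim: s => [|x s IH] //= [->|ha] hb; apply List.in_or_app.
- by left; apply List.in_map.
- by right; apply IH.
Qed.

Lemma mem_map_In (T : Type) (f : T -> R) s y :
  y \in map f s -> exists x, List.In x s /\ y = f x.
Proof.
elim: s => [|x s IH] //=; rewrite in_cons => /orP[/eqP->|/IH[x' [h1 h2]]].
  by exists x; split; [left|].
by exists x'; split; [right|].
Qed.

Lemma In_map_mem (T : Type) (f : T -> R) s x :
  List.In x s -> f x \in map f s.
Proof.
elim: s => [|y s IH] //= [->|h]; rewrite in_cons; first by rewrite eqxx.
by rewrite IH ?orbT.
Qed.

Lemma pos_transfer (T : Type) (s : seq T) (P : pred T) (u v : T -> R) :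
  (forall j, P j -> 0 <= u j) -> (forall j, P j -> 0 <= v j) ->
  (forall j, P j -> 0 < u j -> 0 < v j) ->
  0 < \sum_(j <- s | P j) u j -> 0 < \sum_(j <- s | P j) v j.
Proof.
move=> hu hv huv; elim: s => [|j s IH]; first by rewrite big_nil ltxx.
rewrite !big_cons; case: (boolP (P j)) => // pj.
have h1 : 0 <= \sum_(i <- s | P i) u i by apply: sumr_ge0.
have h2 : 0 <= \sum_(i <- s | P i) v i by apply: sumr_ge0.
move=> H; have uj := hu j pj; have vj := hv j pj.
case: (ltrP 0 (u j)) => hu'; first by have := huv j pj hu'; lra.
have e : u j = 0 by lra.
rewrite e add0r in H; have := IH H; lra.
Qed.

Definition dot (N : nat) (a d : nat -> R) := \sum_(i < N) a i * d i.

Definition cmb (N : nat) (a p : nat -> R) : nat -> R :=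
  fun i => - p N * a i + a N * p i.

Lemma split3 N (F : (nat -> R) -> R) (A : seq (nat -> R)) :
  \sum_(a <- A) F a = \sum_(a <- A | a N == 0) F a + \sum_(a <- A | 0 < a N) F a
     + \sum_(a <- A | a N < 0) F a.
Proof.
elim: A => [|a A IH]; first by rewrite !big_nil !addr0.
rewrite !big_cons IH; case: (ltrgtP (a N) 0) => h /=; ring.
Qed.

Lemma gordan N (A : seq (nat -> R)) :
  ~ (exists d, forall a, List.In a A -> 0 < dot N a d) ->
  exists lam : (nat -> R) -> R, (forall a, 0 <= lam a) /\
    0 < \sum_(a <- A) lam a /\
    forall i, (i < N)%N -> \sum_(a <- A) lam a * a i = 0.
Proof.
elim: N A => [|N IH] A nd.
  case: A nd => [|a0 A] nd.
    by exfalso; apply: nd; exists (fun _ => 0).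
  exists (fun _ => 1); split => //; split => //.
  rewrite big_cons; have : 0 <= \sum_(a <- A) (1 : R) by apply: sumr_ge0.
  lra.
set A0 := [seq a <- A | a N == 0]; set Ap := [seq a <- A | 0 < a N].
set Am := [seq a <- A | a N < 0].
set A' := A0 ++ [seq cmb N a p | a <- Ap, p <- Am].
have dotc : forall a p d, dot N (cmb N a p) d = - p N * dot N a d + a N * dot N p d.
  move=> a p d; rewrite /dot /cmb !mulr_sumr -big_split /=.
  by apply: eq_bigr => i _; ring.
have nd' : ~ exists d, forall a, List.In a A' -> 0 < dot N a d.
  move=> [d Hd]; apply: nd.
  pose D a := dot N a d.
  have [|z [Hlo Hup]] := sep_exists (lo := map (fun a => - D a / a N) Ap)
      (up := map (fun p => D p / (- p N)) Am).
    move=> x y /mem_map_In [a [ha ->]] /mem_map_In [p [hp ->]].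
    have /In_filter [ha1 ha2] := ha.
    have /In_filter [hp1 hp2] := hp.
    have hc := Hd (cmb N a p) (List.in_or_app _ _ _ (or_intror (In_allpairs (cmb N) ha hp))).
    rewrite dotc in hc.
    have hpN : 0 < - p N by rewrite oppr_gt0.
    rewrite -subr_gt0.
    have -> : D p / - p N - - D a / a N = (- p N * D a + a N * D p) / (a N * - p N).
      by field; rewrite ltr0_neq0 // lt0r_neq0.
    by rewrite divr_gt0 // mulr_gt0.
    exists (fun i => if i == N then z else d i) => a Ha.
  have -> : dot N.+1 a (fun i => if i == N then z else d i) = D a + a N * z.
    rewrite /dot big_ord_recr /= eqxx; congr (_ + _).
    by apply: eq_bigr => i _; rewrite (ltn_eqF (ltn_ord i)).
  case: (ltrgtP (a N) 0) => hs.
  - have hIn : List.In a Am by apply (proj2 (In_filter _ _ _)); split.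
    have := Hup _ (In_map_mem (fun p => D p / (- p N)) hIn).
    set v := D a / - a N => hv.
    have hDa : D a = v * (- a N) by rewrite /v mulfVK // oppr_eq0 lt_eqF.
    rewrite hDa; nra.
  - have hIn : List.In a Ap by apply (proj2 (In_filter _ _ _)); split.
    have := Hlo _ (In_map_mem (fun a => - D a / a N) hIn).
    set v := - D a / a N => hv.
    have hDa : D a = - (v * a N) by rewrite /v mulfVK ?opprK // gt_eqF.
    rewrite hDa; nra.
  - have hIn : List.In a A' by apply: List.in_or_app; left; apply (proj2 (In_filter _ _ _)); split => //; rewrite hs.
    have := Hd a hIn; rewrite hs /D; lra.
have [lam' [Hl0 [Hlpos Hlsum]]] := IH A' nd'.
pose lam a := if a N == 0 then lam' a else if 0 < a N then
   \sum_(p <- Am) lam' (cmb N a p) * (- p N)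
  else \sum_(a' <- Ap) lam' (cmb N a' a) * a' N.
have key : forall G : (nat -> R) -> R,
    \sum_(a <- A) lam a * G a =
    \sum_(a <- A0) lam' a * G a + \sum_(a <- A | 0 < a N) \sum_(p <- A | p N < 0)
        lam' (cmb N a p) * (- p N * G a + a N * G p).
  move=> G; rewrite (split3 N) -addrA; congr (_ + _).
    rewrite /A0 big_filter; apply: eq_bigr => a /eqP ha.
    by rewrite /lam ha eqxx.
  rewrite [X in _ + X](eq_bigr (fun p => \sum_(a <- A | 0 < a N) lam' (cmb N a p) * a N * G p)); last first.
    move=> p hp; rewrite /lam (lt_eqF hp) (lt_gtF hp) /Ap big_filter mulr_suml.
    by apply: eq_bigr.
  rewrite exchange_big /= -big_split /=; apply: eq_bigr => a ha.
  rewrite /lam (gt_eqF ha) ha /Am big_filter mulr_suml -big_split /=.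
  by apply: eq_bigr => p _; ring.
have key' : forall G : (nat -> R) -> R,
    \sum_(a <- A') lam' a * G a = \sum_(a <- A0) lam' a * G a +
      \sum_(a <- A | 0 < a N) \sum_(p <- A | p N < 0) lam' (cmb N a p) * G (cmb N a p).
  move=> G; rewrite big_cat /=; congr (_ + _).
  by rewrite big_allpairs_dep /Ap /Am big_filter; apply: eq_bigr => a _; rewrite big_filter.
exists lam; split; last split.
- move=> a; rewrite /lam; case: ifP => _ //; case: ifP => _.
    rewrite /Am big_filter; apply: sumr_ge0 => p hp; apply: mulr_ge0 => //.
    by rewrite oppr_ge0 ltW.
  rewrite /Ap big_filter; apply: sumr_ge0 => p hp; apply: mulr_ge0 => //.
  exact: ltW.
- have hA : \sum_(a <- A) lam a = \sum_(a <- A) lam a * 1.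
    by apply: eq_bigr => *; rewrite mulr1.
  have hA' : \sum_(a <- A') lam' a = \sum_(a <- A') lam' a * 1.
    by apply: eq_bigr => *; rewrite mulr1.
  rewrite hA (key (fun _ => 1)); rewrite hA' (key' (fun _ => 1)) in Hlpos.
  set S0 := \sum_(a <- A0) lam' a * 1 in Hlpos *.
  have h0 : 0 <= S0 by apply: sumr_ge0 => a _; rewrite mulr1.
  set U := \sum_(a <- A | _) _ in Hlpos.
  set V := \sum_(a <- A | _) _.
  have hU : 0 <= U.
    by apply: sumr_ge0 => a _; apply: sumr_ge0 => p _; rewrite mulr1; apply: Hl0.
  have hV : 0 <= V.
    apply: sumr_ge0 => a ha; apply: sumr_ge0 => p hp; apply: mulr_ge0 => //.
    rewrite !mulr1; lra.
  suff : 0 < U -> 0 < V.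
    move=> H; case: (ltrP 0 U) => hu; first by have := H hu; lra.
    lra.
  apply: pos_transfer.
  + by move=> a _; apply: sumr_ge0 => p _; rewrite mulr1; apply: Hl0.
  + move=> a ha; apply: sumr_ge0 => p hp; apply: mulr_ge0 => //.
    rewrite !mulr1; lra.
  + move=> a ha; apply: pos_transfer.
    * by move=> p _; rewrite mulr1; apply: Hl0.
    * move=> p hp; apply: mulr_ge0 => //; rewrite !mulr1; lra.
    * move=> p hp; rewrite mulr1 => hl; apply: mulr_gt0 => //; rewrite !mulr1; lra.
- move=> i; rewrite ltnS leq_eqVlt => /orP[/eqP->|hi].
    rewrite (key (fun a => a N)).
    rewrite /A0 big_filter big1 ?add0r; last by move=> a /eqP->; rewrite mulr0.
    apply: big1 => a _; apply: big1 => p _; rewrite -[RHS](mulr0 (lam' (cmb N a p))); congr (_ * _); ring.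
  by rewrite (key (fun a => a i)) -[RHS](Hlsum i hi) (key' (fun a => a i)).

Qed.
End Gordan.

Section Enc.
Variable R : realFieldType.
Definition enc n (a1 a2 a3 : 'I_n -> R) (j : nat) : R :=
  if (insub j : option 'I_n) is Some i then a1 i else
  if (insub (j - n)%N : option 'I_n) is Some i then a2 i else
  if (insub (j - n - n)%N : option 'I_n) is Some i then a3 i else 0.

Lemma enc1 n (a1 a2 a3 : 'I_n -> R) (i : 'I_n) : enc a1 a2 a3 i = a1 i.
Proof. by rewrite /enc valK. Qed.
Lemma enc2 n (a1 a2 a3 : 'I_n -> R) (i : 'I_n) : enc a1 a2 a3 (n + i)%N = a2 i.
Proof. by rewrite /enc insubN ?addKn ?valK // -leqNgt leq_addr. Qed.
Lemma enc3 n (a1 a2 a3 : 'I_n -> R) (i : 'I_n) : enc a1 a2 a3 (n + n + i)%N = a3 i.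
Proof.
rewrite /enc insubN; last by rewrite -leqNgt -addnA leq_addr.
rewrite -addnA addKn insubN; last by rewrite -leqNgt leq_addr.
by rewrite addKn valK.
Qed.

Lemma dot_enc n (a1 a2 a3 : 'I_n -> R) d :
  dot (n + n + n) (enc a1 a2 a3) d =
  \sum_i (a1 i * d i + a2 i * d (n + i)%N + a3 i * d (n + n + i)%N).
Proof.
rewrite /dot big_split_ord big_split_ord /= -!big_split /=.
by apply: eq_bigr => i _; rewrite enc1 enc2 enc3.
Qed.
End Enc.


Lemma term_id (R : realType) (L r s q t2 t3 : R) :
  4 * L * s * (2 * L * r + t2 * s + t3 * q) =
  (2 * L * q + t3 * s) ^+ 2 + s ^+ 2 * (4 * L * t2 - t3 ^+ 2) + 4 * L ^+ 2 * (2 * r * s - q ^+ 2).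
Proof. ring. Qed.

Lemma term_ge0 (R : realType) (L r s q t2 t3 : R) : 0 < L -> inK r s q -> inK (2 * L) t2 t3 ->
  0 <= 2 * L * r + t2 * s + t3 * q.
Proof.
move=> hL [hr [hs hq]] [_ [ht2 ht3]].
have ht3' : t3 ^+ 2 <= 4 * L * t2 by move: ht3; rewrite (_ : 2 * (2 * L) = 4 * L) //; ring.
have hq' : q ^+ 2 <= 2 * r * s by [].
have key : 0 <= 4 * L * s * (2 * L * r + t2 * s + t3 * q).
  rewrite term_id; apply: addr_ge0; first apply: addr_ge0.
  - exact: sqr_ge0.
  - by apply: mulr_ge0; [exact: sqr_ge0| lra].
  - by apply: mulr_ge0; [apply: mulr_ge0; [lra | exact: sqr_ge0] | lra].
case: (ltrP 0 s) => hs'.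
  have hp : 0 < 4 * L * s by apply: mulr_gt0 => //; apply: mulr_gt0 => //; lra.
  by move: key; rewrite pmulr_rge0.
have s0 : s = 0 by lra.
have q0 : q = 0.
  apply/eqP; rewrite -sqrf_eq0 eq_le sqr_ge0 andbT.
  by move: hq; rewrite s0 mulr0.
rewrite s0 q0 !mulr0 !addr0; apply: mulr_ge0 => //; lra.
Qed.

Lemma term_tight (R : realType) (L r s q t2 t3 : R) : 0 < L -> 0 < s -> inK r s q -> inK (2 * L) t2 t3 ->
  2 * L * r + t2 * s + t3 * q = 0 -> t3 ^+ 2 = 2 * (2 * L) * t2.
Proof.
move=> hL hs [hr [_ hq]] [_ [ht2 ht3]] e.
have ht3' : t3 ^+ 2 <= 4 * L * t2 by move: ht3; rewrite (_ : 2 * (2 * L) = 4 * L) //; ring.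
rewrite (_ : 2 * (2 * L) = 4 * L); last ring.
have := term_id L r s q t2 t3; rewrite e mulr0 => e'.
have h1 := sqr_ge0 (2 * L * q + t3 * s).
have h3 : 0 <= 4 * L ^+ 2 * (2 * r * s - q ^+ 2).
  by apply: mulr_ge0; [apply: mulr_ge0; [lra | exact: sqr_ge0] | lra].
have h2 : s ^+ 2 * (4 * L * t2 - t3 ^+ 2) <= 0 by lra.
have hs2 : 0 < s ^+ 2 by rewrite exprn_gt0.
have : 4 * L * t2 - t3 ^+ 2 <= 0.
  by move: h2; rewrite pmulr_rle0.
lra.
Qed.

Lemma improve1 (R : realFieldType) (L t2 t3 be ga : R) : 0 < L -> 0 <= 4 * L * t2 - t3 ^+ 2 ->
  (4 * L * t2 - t3 ^+ 2 = 0 -> 0 < - (4 * L) * be + 2 * t3 * ga) ->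
  exists tau0, 0 < tau0 /\ forall tau, 0 < tau -> tau <= tau0 ->
    0 <= 4 * L * (t2 - tau * be) - (t3 - tau * ga) ^+ 2.
Proof.
move=> hL hh hg.
set h0 := 4 * L * t2 - t3 ^+ 2 in hh hg.
set g := - (4 * L) * be + 2 * t3 * ga in hg.
have E tau : 4 * L * (t2 - tau * be) - (t3 - tau * ga) ^+ 2 = h0 + tau * g - tau ^+ 2 * ga ^+ 2.
  by rewrite /h0 /g; ring.
have hga := sqr_ge0 ga; have hg2 := sqr_ge0 g.
case: (ltrP 0 h0) => hpos.
- set Dn := g ^+ 2 + ga ^+ 2 + h0 + 1.
  have hD : 0 < Dn by rewrite /Dn; lra.
  exists (h0 / Dn); split; first by rewrite divr_gt0.
  move=> tau ht; rewrite ler_pdivlMr // => h1; rewrite E.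
  have h2 : tau <= 1.
    have hDh : h0 < Dn by rewrite /Dn; lra.
    have : tau * Dn <= 1 * Dn by rewrite mul1r; lra.
    by rewrite ler_pM2r.
  have h3 : tau ^+ 2 * ga ^+ 2 <= tau * ga ^+ 2.
    apply: ler_wpM2r => //; rewrite expr2; have := ler_wpM2l (ltW ht) h2; by rewrite mulr1.
  have h4 : - g <= g ^+ 2 + 1.
    have := sqr_ge0 (g + 1 / 2); rewrite expr2 => h; rewrite expr2; nra.
  have h5 : tau * (- g) <= tau * (g ^+ 2 + 1) by apply: ler_wpM2l => //; lra.
  have h6 : tau * Dn = tau * (g ^+ 2 + 1) + tau * ga ^+ 2 + tau * h0 by rewrite /Dn; ring.
  have h7 : 0 <= tau * h0 by apply: mulr_ge0; lra.
  have h8 : tau * (- g) = - (tau * g) by ring.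
  lra.
- have h00 : h0 = 0 by lra.
  have gpos := hg h00.
  have hD : 0 < ga ^+ 2 + 1 by lra.
  exists (g / (ga ^+ 2 + 1)); split; first by rewrite divr_gt0.
  move=> tau ht; rewrite ler_pdivlMr // => h1; rewrite E h00 add0r.
  have -> : tau * g - tau ^+ 2 * ga ^+ 2 = tau * (g - tau * ga ^+ 2) by ring.
  apply: mulr_ge0; first lra.
  have : tau * ga ^+ 2 <= tau * (ga ^+ 2 + 1) by apply: ler_wpM2l; lra.
  lra.
Qed.

Lemma memIn (T : eqType) (x : T) (s : seq T) : x \in s -> List.In x s.
Proof.
elim: s => [|y s IH] //=; rewrite in_cons => /orP[/eqP->|h]; [by left|right; exact: IH].
Qed.

Section Entries.
Variable R : realFieldType.
Lemma mul_entry m n (M : 'M[R]_(m, n)) (u : 'cV[R]_n) k : (M *m u) k 0 = \sum_i M k i * u i 0.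
Proof. by rewrite mxE. Qed.
Lemma trmul_entry m n (M : 'M[R]_(m, n)) (u : 'cV[R]_m) i : (M^T *m u) i 0 = \sum_k M k i * u k 0.
Proof. by rewrite mxE; apply: eq_bigr => k _; rewrite mxE. Qed.
Lemma col_entry m (F : 'I_m -> R) k : (\col_k F k) k 0 = F k.
Proof. by rewrite mxE. Qed.
Lemma zero_entry m k : (0 : 'cV[R]_m) k 0 = 0.
Proof. by rewrite mxE. Qed.
Lemma add_entry m (a b : 'cV[R]_m) k : (a + b) k 0 = a k 0 + b k 0.
Proof. by rewrite mxE. Qed.
Lemma sub_entry m (a b : 'cV[R]_m) k : (a - b) k 0 = a k 0 - b k 0.
Proof. by rewrite !mxE. Qed.
Lemma opp_entry m (a : 'cV[R]_m) k : (- a) k 0 = - a k 0.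
Proof. by rewrite mxE. Qed.
Lemma scale_entry m (c : R) (a : 'cV[R]_m) k : (c *: a) k 0 = c * a k 0.
Proof. by rewrite mxE. Qed.
End Entries.

Section Main.
Variable R : realType.
Variables (n m : nat) (chi : 'I_n -> R * R) (chim chip : 'I_m -> R * R) (f : 'cV[R]_n).
Local Notation l k := (lvec chim chip k 0).
Local Notation B1 := (B1mx chi chim chip).
Local Notation B2 := (B2mx chi chim chip).
Local Notation D := (Dmx chi chim chip).

Lemma bilin_swap (M : 'M[R]_(m,n)) (u : 'cV[R]_n) (s : 'cV[R]_m) :
  \sum_k (M *m u) k 0 * s k 0 = \sum_i u i 0 * (M^T *m s) i 0.
Proof.
under eq_bigr do rewrite mxE mulr_suml.
rewrite exchange_big /=; apply: eq_bigr => i _; rewrite mxE mulr_sumr.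
by apply: eq_bigr => k _; rewrite mxE; ring.
Qed.

Lemma col_entry_eq (a b c d : 'cV[R]_m) k : a + b + c = d -> a k 0 = d k 0 - b k 0 - c k 0.
Proof. move=> <-; rewrite !mxE; ring. Qed.

Lemma col_entry_eq0 (a b : 'cV[R]_m) k : a + b = 0 -> a k 0 = - b k 0.
Proof. move=> e; have := congr1 (fun M : 'cV[R]_m => M k 0) e; rewrite !mxE => /eqP; by rewrite addr_eq0 => /eqP. Qed.

Lemma gap_id s q r u1 u2 w t1 t2 t3 :
  PX_feasible chi chim chip f s q r -> PXd_feasible chi chim chip u1 u2 w t1 t2 t3 ->
  PX_obj chim chip s r - PXd_obj f w =
  \sum_k (2 * l k * r k 0 + t2 k 0 * s k 0 + t3 k 0 * q k 0).
Proof.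
move=> [_ [_ [h1 [h2 [h3 _]]]]] [_ [_ [e2 [e3 [e1 _]]]]].
set b1 := B1 *m u1 in e2 *; set b2 := B2 *m u2 in e2 *; set dw := D *m w in e3 *.
have T2 k : t2 k 0 = l k - b1 k 0 - b2 k 0 by apply: col_entry_eq.
have T3 k : t3 k 0 = - dw k 0 by apply: col_entry_eq0.
have S1 : \sum_k b1 k 0 * s k 0 = 0.
  by rewrite /b1 bilin_swap h1; apply: big1 => i _; rewrite mxE mulr0.
have S2 : \sum_k b2 k 0 * s k 0 = 0.
  by rewrite /b2 bilin_swap h2; apply: big1 => i _; rewrite mxE mulr0.
have S3 : \sum_k dw k 0 * q k 0 = PXd_obj f w.
  by rewrite /dw bilin_swap h3 /PXd_obj; apply: eq_bigr => i _; rewrite mulrC.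
have E : \sum_k (2 * l k * r k 0 + t2 k 0 * s k 0 + t3 k 0 * q k 0) =
   \sum_k l k * s k 0 + 2 * \sum_k l k * r k 0 - \sum_k b1 k 0 * s k 0
     - \sum_k b2 k 0 * s k 0 - \sum_k dw k 0 * q k 0.
  rewrite mulr_sumr -big_split -!sumrB /=; apply: eq_bigr => k _.
  rewrite T2 T3; ring.
by rewrite E S1 S2 S3 /PX_obj; ring.
Qed.


Lemma kkt u1 u2 w t1 t2 t3 :
  (forall k, 0 < l k) ->
  PXd_feasible chi chim chip u1 u2 w t1 t2 t3 ->
  (forall v1 v2 w1 e1 e2 e3, PXd_feasible chi chim chip v1 v2 w1 e1 e2 e3 ->
      PXd_obj f w1 <= PXd_obj f w) ->
  exists nu : 'I_m -> R, (forall k, 0 <= nu k) /\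
    (forall k, nu k * (4 * l k * t2 k 0 - t3 k 0 ^+ 2) = 0) /\
    B1^T *m (\col_k (4 * nu k * l k)) = 0 /\ B2^T *m (\col_k (4 * nu k * l k)) = 0 /\
    D^T *m (\col_k (- 2 * nu k * t3 k 0)) = f.
Proof.
move=> hl hfeas hopt.
have [ht1 [ht2 [e2 [e3 [e1 hK]]]]] := hfeas.
have T2 k : t2 k 0 = l k - (B1 *m u1) k 0 - (B2 *m u2) k 0 by apply: col_entry_eq.
have T3 k : t3 k 0 = - (D *m w) k 0 by apply: col_entry_eq0.
have T1 k : t1 k 0 = 2 * l k by rewrite e1 scale_entry.
pose h k := 4 * l k * t2 k 0 - t3 k 0 ^+ 2.
have hh k : 0 <= h k.
  have [_ [_ hk]] := hK k; rewrite T1 in hk; rewrite /h.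
  have -> : 4 * l k * t2 k 0 = 2 * (2 * l k) * t2 k 0 by ring.
  lra.
pose N := (n + n + n)%N.
pose cvec := enc (fun _ : 'I_n => 0) (fun _ => 0) (fun i => f i 0).
pose gvec k := enc (fun i => - (4 * l k) * B1 k i) (fun i => - (4 * l k) * B2 k i)
   (fun i => 2 * t3 k 0 * D k i).
pose A := cvec :: [seq gvec k | k <- [seq k <- index_enum 'I_m | h k == 0]].
case: (pselect (exists d, forall a, List.In a A -> 0 < dot N a d)) => [[d Hd]|nd].
  exfalso.
  pose d1 : 'cV[R]_n := \col_i d i.
  pose d2 : 'cV[R]_n := \col_i d (n + i)%N.
  pose dw : 'cV[R]_n := \col_i d (n + n + i)%N.
  pose be k := (B1 *m d1) k 0 + (B2 *m d2) k 0.
  pose ga k := (D *m dw) k 0.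
  have gE k : dot N (gvec k) d = - (4 * l k) * be k + 2 * t3 k 0 * ga k.
    rewrite dot_enc /be /ga !mul_entry mulrDr !mulr_sumr -!big_split /=.
    by apply: eq_bigr => i _; rewrite !col_entry; ring.
  have cE : dot N cvec d = \sum_i f i 0 * dw i 0.
    by rewrite dot_enc; apply: eq_bigr => i _; rewrite col_entry; ring.
  have hc : 0 < dot N cvec d by apply: Hd; left.
  have hg k : h k = 0 -> 0 < dot N (gvec k) d.
    move=> hk0; apply: Hd; right; apply: List.in_map.
    apply: (proj2 (In_filter _ _ _)); split; first by apply: memIn; exact: mem_index_enum.
    by rewrite hk0 eqxx.
  have thr k : exists tau0, 0 < tau0 /\ forall tau, 0 < tau -> tau <= tau0 ->
      0 <= 4 * l k * (t2 k 0 - tau * be k) - (t3 k 0 - tau * ga k) ^+ 2.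
    apply: improve1 => //; first exact: (hh k).
    by move=> hk0; rewrite -gE; apply: hg.
  have [F hF] := fin_all_exists thr.
  pose S := \sum_k (F k)^-1.
  have hS : 0 <= S by apply: sumr_ge0 => k _; rewrite invr_ge0; apply: ltW; case: (hF k).
  pose tau := (1 + S)^-1.
  have htau : 0 < tau by rewrite invr_gt0; lra.
  have htauF k : tau <= F k.
    have hFk : 0 < F k by case: (hF k).
    have hFS : (F k)^-1 <= S.
      rewrite /S (bigD1 k) //=.
      have : 0 <= \sum_(j | j != k) (F j)^-1.
        by apply: sumr_ge0 => j _; rewrite invr_ge0; apply: ltW; case: (hF j).
      lra.
    rewrite /tau -[F k]invrK lef_pV2 ?posrE ?invr_gt0 //; lra.
  pose v1 := u1 + tau *: d1. pose v2 := u2 + tau *: d2. pose vw := w + tau *: dw.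
  pose E2 := lvec chim chip - B1 *m v1 - B2 *m v2.
  pose E3 := - (D *m vw).
  have E2k k : E2 k 0 = t2 k 0 - tau * be k.
    rewrite /E2 /v1 /v2 !mulmxDr -!scalemxAr !sub_entry !add_entry !scale_entry T2 /be.
    ring.
  have E3k k : E3 k 0 = t3 k 0 - tau * ga k.
    by rewrite /E3 /vw mulmxDr -scalemxAr opp_entry add_entry scale_entry T3 /ga; ring.
  have hE k : 0 <= 4 * l k * E2 k 0 - E3 k 0 ^+ 2.
    by rewrite E2k E3k; apply: (proj2 (hF k)).
  have hE2 k : 0 <= E2 k 0.
    have := hE k; have := sqr_ge0 (E3 k 0); have := hl k.
    move=> a b c; have : 0 <= 4 * l k * E2 k 0 by lra.
    rewrite pmulr_rge0 //; lra.
  have feas : PXd_feasible chi chim chip v1 v2 vw t1 E2 E3.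
    split => //; split => //; split.
      by rewrite /E2 addrAC !subrK.
    split; first by rewrite /E3 addNr.
    split => // k; split => //; split => //.
    rewrite T1; have := hE k.
    have -> : 2 * (2 * l k) * E2 k 0 = 4 * l k * E2 k 0 by ring.
    lra.
  have := hopt _ _ _ _ _ _ feas.
  have -> : PXd_obj f vw = PXd_obj f w + tau * \sum_i f i 0 * dw i 0.
    rewrite /PXd_obj mulr_sumr -big_split; apply: eq_bigr => i _.
    by rewrite /vw add_entry scale_entry /=; ring.
  rewrite -cE; have : 0 < tau * dot N cvec d by apply: mulr_gt0.
  lra.
have [lam [hl0 [hlpos hlsum]]] := gordan nd.
pose lam0 := lam cvec.
pose mu k := if h k == 0 then lam (gvec k) else 0.
have sumA (G : (nat -> R) -> R) :
    \sum_(a <- A) lam a * G a = lam0 * G cvec + \sum_k mu k * G (gvec k).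
  rewrite big_cons big_map big_filter; congr (_ + _).
  rewrite big_mkcond /=; apply: eq_bigr => k _; rewrite /mu.
  by case: (h k == 0) => //; rewrite mul0r.
have hmu k : 0 <= mu k by rewrite /mu; case: ifP.
have hcoord j : (j < N)%N -> lam0 * cvec j + \sum_k mu k * gvec k j = 0.
  by move=> hj; rewrite -(sumA (fun a => a j)); exact: hlsum.
have hlin d : lam0 * dot N cvec d + \sum_k mu k * dot N (gvec k) d = 0.
  rewrite -(sumA (fun a => dot N a d)) /dot.
  under eq_bigr do rewrite mulr_sumr.
  rewrite exchange_big /=; apply: big1 => j _.
  under eq_bigr do rewrite mulrA.
  by rewrite -mulr_suml hlsum ?mul0r.
have hlam0 : 0 < lam0.
  rewrite lt0r hl0 andbT; apply/negP => /eqP h0.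
  have hmupos : 0 < \sum_k mu k.
    have e := sumA (fun _ => 1).
    rewrite h0 mul0r add0r in e.
    move: hlpos; rewrite (eq_bigr (fun a => lam a * 1)); last by move=> a _; rewrite mulr1.
    rewrite e; under eq_bigr do rewrite mulr1; by [].
  pose d := enc (fun i => - u1 i 0) (fun i => - u2 i 0) (fun i => - w i 0).
  have gd k : dot N (gvec k) d = 4 * l k ^+ 2 - h k + t3 k 0 ^+ 2.
    have -> : dot N (gvec k) d = 4 * l k * (B1 *m u1) k 0 + 4 * l k * (B2 *m u2) k 0
        + 2 * t3 k 0 * - (D *m w) k 0.
      rewrite dot_enc !mul_entry !mulr_sumr -sumrN !mulr_sumr -!big_split /=.
      by apply: eq_bigr => i _; rewrite /d enc1 enc2 enc3; ring.
    rewrite /h -T3 T2; ring.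
  have := hlin d; rewrite h0 mul0r add0r => e0.
  have : 0 < \sum_k mu k * dot N (gvec k) d.
    apply: (pos_transfer (u := mu)) => //.
    - move=> k _; rewrite /mu; case: ifP => [/eqP hk|_]; last by rewrite mul0r.
      apply: mulr_ge0; first exact: hl0.
      rewrite gd hk; have := sqr_ge0 (l k); have := sqr_ge0 (t3 k 0); lra.
    - move=> k _; rewrite /mu; case: ifP => [/eqP hk|_]; last by rewrite ltxx.
      move=> hpos; apply: mulr_gt0 => //.
      rewrite gd hk; have := hl k; have := sqr_ge0 (t3 k 0).
      have : 0 < l k ^+ 2 by rewrite exprn_gt0.
      lra.
  by rewrite e0 ltxx.
pose nu k := mu k / lam0.
have lam0n : lam0 != 0 by rewrite gt_eqF.
exists nu; split; first by move=> k; rewrite /nu divr_ge0 // ltW.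
split.
  move=> k; rewrite /nu /mu; case: ifP => [/eqP hk|_]; last by rewrite !mul0r.
  by rewrite -/(h k) hk mulr0.
have hi1' (i : 'I_n) : (i < N)%N by rewrite /N (leq_trans (ltn_ord i)) // -addnA leq_addr.
have hi2 (i : 'I_n) : (n + i < N)%N by rewrite /N -addnA ltn_add2l (leq_trans (ltn_ord i)) // leq_addr.
have hi3 (i : 'I_n) : (n + n + i < N)%N by rewrite /N ltn_add2l.
split.
  apply/colP => i; rewrite trmul_entry zero_entry.
  have := hcoord i (hi1' i); rewrite /cvec /gvec enc1.
  under eq_bigr do rewrite enc1.
  move=> H.
  transitivity (- lam0^-1 * (lam0 * 0 + \sum_k mu k * (- (4 * l k) * B1 k i))); last first.
    by rewrite H mulr0.
  rewrite mulr0 add0r mulr_sumr; apply: eq_bigr => k _; rewrite col_entry /nu.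
  by field.
split.
  apply/colP => i; rewrite trmul_entry zero_entry.
  have := hcoord (n + i)%N (hi2 i); rewrite /cvec /gvec enc2.
  under eq_bigr do rewrite enc2.
  move=> H.
  transitivity (- lam0^-1 * (lam0 * 0 + \sum_k mu k * (- (4 * l k) * B2 k i))); last first.
    by rewrite H mulr0.
  rewrite mulr0 add0r mulr_sumr; apply: eq_bigr => k _; rewrite col_entry /nu.
  by field.
apply/colP => i; rewrite trmul_entry.
have := hcoord (n + n + i)%N (hi3 i); rewrite /cvec /gvec enc3.
under eq_bigr do rewrite enc3.
move=> H.
have Hf : f i 0 = - lam0^-1 * \sum_k mu k * (2 * t3 k 0 * D k i).
  rewrite -[f i 0](mulKf lam0n); move/eqP: H; rewrite addr_eq0 => /eqP ->.
  by rewrite mulrN mulNr.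
rewrite Hf mulr_sumr; apply: eq_bigr => k _; rewrite col_entry /nu.
by field.
Qed.


Lemma tight s q r u1 u2 w t1 t2 t3 k :
  (forall k, 0 < l k) ->
  PX_solves chi chim chip f s q r ->
  PXd_feasible chi chim chip u1 u2 w t1 t2 t3 ->
  (forall v1 v2 w1 e1 e2 e3, PXd_feasible chi chim chip v1 v2 w1 e1 e2 e3 ->
      PXd_obj f w1 <= PXd_obj f w) ->
  s k 0 != 0 -> t3 k 0 ^+ 2 = 4 * l k * t2 k 0.
Proof.
move=> hl [hP hoptP] hfeas hopt hsk.
have [nu [hnu [hnuh [hB1 [hB2 hD]]]]] := kkt hl hfeas hopt.
have [ht1 [ht2 [e2 [e3 [e1 hK]]]]] := hfeas.
have T1 j : t1 j 0 = 2 * l j by rewrite e1 scale_entry.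
pose s' := \col_j (4 * nu j * l j).
pose q' := \col_j (- 2 * nu j * t3 j 0).
pose r' := \col_j (nu j * t3 j 0 ^+ 2 / (2 * l j)).
have lj j : l j != 0 by rewrite gt_eqF.
have feas' : PX_feasible chi chim chip f s' q' r'.
  split; first by move=> j; rewrite col_entry; apply: mulr_ge0; [apply: mulr_ge0 => //; lra | apply: ltW].
  split.
    move=> j; rewrite col_entry; apply: divr_ge0; first by apply: mulr_ge0 => //; exact: sqr_ge0.
    by apply: mulr_ge0; [lra | exact: ltW (hl j)].
  split => //; split => //; split => //.
  move=> j; have hlj := hl j; rewrite col_entry in hlj; rewrite /inK !col_entry; split.
    apply: divr_ge0; first by apply: mulr_ge0 => //; exact: sqr_ge0.
    by apply: mulr_ge0; [lra | exact: ltW hlj].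
  split; first by apply: mulr_ge0; [apply: mulr_ge0 => //; lra | exact: ltW hlj].
  rewrite le_eqVlt; apply/orP; left; apply/eqP; field; by rewrite gt_eqF.
have g' := gap_id feas' hfeas.
have g0 : \sum_j (2 * l j * r' j 0 + t2 j 0 * s' j 0 + t3 j 0 * q' j 0) = 0.
  apply: big1 => j _; have hn := hnuh j; have hlj := hl j; rewrite col_entry in hn hlj.
  rewrite !col_entry -hn; field; by rewrite gt_eqF.
rewrite g0 in g'.
have hle := hoptP _ _ _ feas'.
have g := gap_id hP hfeas.
have [hs [hr [_ [_ [_ hKP]]]]] := hP.
have hterm j : 0 <= 2 * l j * r j 0 + t2 j 0 * s j 0 + t3 j 0 * q j 0.
  apply: term_ge0 => //; rewrite -T1; exact: hK.
have hsum : \sum_j (2 * l j * r j 0 + t2 j 0 * s j 0 + t3 j 0 * q j 0) <= 0 by lra.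
have hk0 : 2 * l k * r k 0 + t2 k 0 * s k 0 + t3 k 0 * q k 0 = 0.
  move: hsum; rewrite (bigD1 k) //=.
  have : 0 <= \sum_(j | j != k) (2 * l j * r j 0 + t2 j 0 * s j 0 + t3 j 0 * q j 0).
    by apply: sumr_ge0 => j _; apply: hterm.
  have := hterm k; lra.
have hspos : 0 < s k 0 by rewrite lt0r hsk hs.
have := term_tight (hl k) hspos (hKP k) _ hk0.
rewrite -T1 => /(_ (hK k)) ->; rewrite T1; ring.
Qed.

End Main.

Definition Qf (R : realFieldType) (x1 x2 u1 u2 z y1 y2 v1 v2 zz : R) : R :=
  (y1 - x1) ^+ 2 + (y2 - x2) ^+ 2 - ((v1 - u1) * (y1 - x1) + (v2 - u2) * (y2 - x2)) - (zz - z) ^+ 2.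

Lemma Qf_sym (R : realFieldType) (x1 x2 u1 u2 z y1 y2 v1 v2 zz : R) :
  Qf x1 x2 u1 u2 z y1 y2 v1 v2 zz = Qf y1 y2 v1 v2 zz x1 x2 u1 u2 z.
Proof. rewrite /Qf; ring. Qed.

Lemma coll_alg (R : realFieldType) (t a1 a2 c1 c2 p1 p2 q1 q2 r1 r2 za zb zc : R) :
  0 < t -> t < 1 ->
  0 <= Qf a1 a2 p1 p2 za ((1 - t) * a1 + t * c1) ((1 - t) * a2 + t * c2) q1 q2 zb ->
  0 <= Qf ((1 - t) * a1 + t * c1) ((1 - t) * a2 + t * c2) q1 q2 zb c1 c2 r1 r2 zc ->
  Qf a1 a2 p1 p2 za c1 c2 r1 r2 zc = 0 ->
  zb = (1 - t) * za + t * zc.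
Proof.
move=> ht0 ht1 h12 h23 h13.
set e := (1 - t) * (zb - za) - t * (zc - zb).
have key : e ^+ 2 = t * (1 - t) * Qf a1 a2 p1 p2 za c1 c2 r1 r2 zc
   - (1 - t) * Qf a1 a2 p1 p2 za ((1 - t) * a1 + t * c1) ((1 - t) * a2 + t * c2) q1 q2 zb
   - t * Qf ((1 - t) * a1 + t * c1) ((1 - t) * a2 + t * c2) q1 q2 zb c1 c2 r1 r2 zc.
  by rewrite /e /Qf; ring.
rewrite h13 mulr0 add0r in key.
have g1 : 0 <= (1 - t) * Qf a1 a2 p1 p2 za ((1 - t) * a1 + t * c1) ((1 - t) * a2 + t * c2) q1 q2 zb.
  by apply: mulr_ge0 => //; lra.
have g2 : 0 <= t * Qf ((1 - t) * a1 + t * c1) ((1 - t) * a2 + t * c2) q1 q2 zb c1 c2 r1 r2 zc.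
  by apply: mulr_ge0 => //; lra.
have : e ^+ 2 <= 0 by rewrite key; lra.
have := sqr_ge0 e => h1 h2.
have : e = 0 by apply/eqP; rewrite -sqrf_eq0 eq_le h2 h1.
rewrite /e => h; lra.
Qed.

Lemma pair_neq_pos (R : realFieldType) (x y : R * R) : x != y ->
  0 < (x.1 - y.1) ^+ 2 + (x.2 - y.2) ^+ 2.
Proof.
move=> hxy; have h1 := sqr_ge0 (x.1 - y.1); have h2 := sqr_ge0 (x.2 - y.2).
rewrite lt_neqAle addr_ge0 // andbT; apply/negP => /eqP h0.
have e1 : (x.1 - y.1) ^+ 2 = 0 by lra.
have e2 : (x.2 - y.2) ^+ 2 = 0 by lra.
move: e1 e2 => /eqP; rewrite sqrf_eq0 subr_eq0 => /eqP e1 /eqP; rewrite sqrf_eq0 subr_eq0 => /eqP e2.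
move: hxy e1 e2; clear h0 h1 h2; case: x y => a b [c d] /= hne e1 e2; by rewrite e1 e2 eqxx in hne.
Qed.

Lemma bar_identity (R : realType) n m (chi : 'I_n -> R * R) (chim chip : 'I_m -> R * R)
    (u1 u2 w : 'cV[R]_n) t1 t2 t3 j :
  PXd_feasible chi chim chip u1 u2 w t1 t2 t3 -> 0 < lvec chim chip j 0 ->
  4 * Qf (chim j).1 (chim j).2 (ext chi u1 (chim j)) (ext chi u2 (chim j))
         (ext chi (2^-1 *: w) (chim j))
         (chip j).1 (chip j).2 (ext chi u1 (chip j)) (ext chi u2 (chip j))
         (ext chi (2^-1 *: w) (chip j))
   = 4 * lvec chim chip j 0 * t2 j 0 - t3 j 0 ^+ 2.
Proof.
move=> [ht1 [ht2 [e2 [e3 [e1 hK]]]]] hl.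
rewrite (col_entry_eq j e2) (col_entry_eq0 j e3).
have hD : (Dmx chi chim chip *m w) j 0 = ext chi w (chip j) - ext chi w (chim j).
  rewrite mul_entry /ext -sumrB; apply: eq_bigr => i _; rewrite mxE; ring.
have hB1 : (B1mx chi chim chip *m u1) j 0 =
    (ext chi u1 (chip j) - ext chi u1 (chim j)) * ((chip j).1 - (chim j).1) / lvec chim chip j 0.
  rewrite mul_entry /ext -sumrB !mulr_suml; apply: eq_bigr => i _; rewrite mxE; ring.
have hB2 : (B2mx chi chim chip *m u2) j 0 =
    (ext chi u2 (chip j) - ext chi u2 (chim j)) * ((chip j).2 - (chim j).2) / lvec chim chip j 0.
  rewrite mul_entry /ext -sumrB !mulr_suml; apply: eq_bigr => i _; rewrite mxE; ring.
have hZ x : ext chi w x = 2 * ext chi (2^-1 *: w) x.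
  rewrite /ext mulr_sumr; apply: eq_bigr => i _; rewrite scale_entry.
  by field.
have hL2 : lvec chim chip j 0 ^+ 2 =
    ((chip j).1 - (chim j).1) ^+ 2 + ((chip j).2 - (chim j).2) ^+ 2.
  by rewrite col_entry /edist sqr_sqrtr // addr_ge0 // sqr_ge0.
rewrite hD hB1 hB2 !(hZ (chip j)) !(hZ (chim j)) /Qf -hL2.
field; by rewrite gt_eqF.
Qed.

Lemma pair_eq (T : Type) (a b : T * T) : a.1 = b.1 -> a.2 = b.2 -> a = b.
Proof. by case: a b => ? ? [? ?] /= -> ->. Qed.

Unset Implicit Arguments. Set Strict Implicit.
Local Open Scope classical_set_scope.
Local Open Scope ring_scope.

Theorem proposition6p2 (R : realType) (O : set (R * R)) (X : seq (R * R))
    (n m : nat) (chi : 'I_n -> (R * R)) (chim chip : 'I_m -> (R * R))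
    (fX : (R * R) -> R)
    (x1 x2 x3 : R * R) (k : 'I_m)
    (s q r : 'cV[R]_m) (u1 u2 w : 'cV[R]_n) :
  admissible_setting O X chi chim chip ->
  x1 \in X -> x2 \in X -> x3 \in X ->
  (exists t : R, 0 <= t <= 1 /\
     x2.1 = (1 - t) * x1.1 + t * x3.1 /\ x2.2 = (1 - t) * x1.2 + t * x3.2) ->
  PX_solves chi chim chip (\col_i fX (chi i)) s q r ->
  PXd_solves chi chim chip (\col_i fX (chi i)) u1 u2 w ->
  ((chim k = x1 /\ chip k = x3) \/ (chim k = x3 /\ chip k = x1)) ->
  s k 0 != 0 ->
  let z := ext chi ((2%:R)^-1 *: w) in
  collinear3 (lift3 x1 (z x1)) (lift3 x2 (z x2)) (lift3 x3 (z x3)).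
Proof.
move=> hadm hx1 hx2 hx3 [t [/andP [ht0 ht1] [hx21 hx22]]] hPX [[t1 [t2 [t3 hfeas]]] hopt] hk hsk z.
have [_ [_ [_ [_ [_ [_ [hpairs [_ hpsurj]]]]]]]] := hadm.
have hl j : 0 < lvec chim chip j 0.
  rewrite col_entry /edist sqrtr_gt0; apply: pair_neq_pos.
  by have [_ [_ h]] := hpairs j; rewrite eq_sym.
have htight := tight hl hPX hfeas hopt hsk.
pose U1 := ext chi u1. pose U2 := ext chi u2.
pose Qv (a b : R * R) := Qf a.1 a.2 (U1 a) (U2 a) (z a) b.1 b.2 (U1 b) (U2 b) (z b).
have hbar j : 4 * Qv (chim j) (chip j) = 4 * lvec chim chip j 0 * t2 j 0 - t3 j 0 ^+ 2.
  exact: bar_identity hfeas (hl j).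
have [ht1' [ht2' [e2 [e3 [e1 hK]]]]] := hfeas.
have hK' j : 0 <= 4 * lvec chim chip j 0 * t2 j 0 - t3 j 0 ^+ 2.
  have [_ [_ h]] := hK j; move: h; rewrite e1 scale_entry.
  have -> : 2 * (2 * lvec chim chip j 0) * t2 j 0 = 4 * lvec chim chip j 0 * t2 j 0 by ring.
  lra.
have Qpos a b : a \in X -> b \in X -> a != b -> 0 <= Qv a b.
  move=> ha hb hab; have [j [[ea eb]|[ea eb]]] := hpsurj a b ha hb hab.
    have := hbar j; have := hK' j; rewrite ea eb; lra.
  have := hbar j; have := hK' j; rewrite ea eb /Qv Qf_sym; lra.
have Q13 : Qv x1 x3 = 0.
  have := hbar k; rewrite htight.
  case: hk => [[ea eb]|[ea eb]]; rewrite ea eb; last rewrite /Qv Qf_sym; lra.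
have x13 : x1 != x3.
  have [_ [_ h]] := hpairs k; case: hk => [[ea eb]|[ea eb]]; rewrite -ea -eb //.
  by rewrite eq_sym.
have hzb : z x2 = (1 - t) * z x1 + t * z x3.
  case: (eqVneq t 0) => [t0|tn0].
    have -> : x2 = x1.
      move: hx21 hx22; rewrite t0 subr0 !mul1r !mul0r !addr0.
      by move=> e1' e2'; apply: pair_eq.
    rewrite t0; ring.
  case: (eqVneq t 1) => [t1e|tn1].
    have -> : x2 = x3.
      move: hx21 hx22; rewrite t1e subrr !mul1r !mul0r !add0r.
      by move=> e1' e2'; apply: pair_eq.
    rewrite t1e; ring.
  have htp : 0 < t by rewrite lt0r tn0.
  have htl : t < 1 by rewrite lt_neqAle tn1.
  have n12 : x1 != x2.
    apply/negP => /eqP e12; move: x13; rewrite -e12 in hx21 hx22.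
    have a1 : t * (x3.1 - x1.1) = 0 by rewrite mulrBr; lra.
    have a2 : t * (x3.2 - x1.2) = 0 by rewrite mulrBr; lra.
    move: a1 a2 => /eqP; rewrite mulf_eq0 (negPf tn0) /= subr_eq0 => /eqP a1 /eqP.
    rewrite mulf_eq0 (negPf tn0) /= subr_eq0 => /eqP a2.
    by rewrite (pair_eq a1 a2) eqxx.
  have n23 : x2 != x3.
    apply/negP => /eqP e23; move: x13; rewrite e23 in hx21 hx22.
    have a1 : (1 - t) * (x3.1 - x1.1) = 0 by rewrite mulrBr; lra.
    have a2 : (1 - t) * (x3.2 - x1.2) = 0 by rewrite mulrBr; lra.
    have t1n : 1 - t != 0 by rewrite subr_eq0 eq_sym.
    move: a1 a2 => /eqP; rewrite mulf_eq0 (negPf t1n) /= subr_eq0 => /eqP a1 /eqP.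
    rewrite mulf_eq0 (negPf t1n) /= subr_eq0 => /eqP a2.
    by rewrite (pair_eq a1 a2) eqxx.
  have h12 := Qpos x1 x2 hx1 hx2 n12.
  have h23 := Qpos x2 x3 hx2 hx3 n23.
  rewrite /Qv hx21 hx22 in h12 h23.
  exact: coll_alg htp htl h12 h23 Q13.
exists (lift3 x1 (z x1)), (lift3 x3 (z x3) - lift3 x1 (z x1)), 0, t, 1.
split; first by rewrite scale0r addr0.
split; last by rewrite scale1r addrC subrK.
apply/rowP => j; rewrite !mxE.
case: j => [[|[|[|//]]] hj] /=.
- rewrite hx21; ring.
- rewrite hx22; ring.
- rewrite hzb; ring.
Qed.
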